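(* For $n\ge 2$, the path $P_n$ with $n$ vertices satisfies $\nu^*(P_n)=2n^2-2n-1$.
   Context: For a finite simple graph $G=(V,E)$ with $\ell=|V|+|E|$, a construction sequence (c-sequence) is a bijection $x:\{1,\dots,\ell\}\to V\sqcup E$ such that every edge $e=uw$ satisfies $x^{-1}(e)>\max\{x^{-1}(u),x^{-1}(w)\}$. The cost of $x$ is $\nu(x)=\sum_{e=uw\in E}\big(2x^{-1}(e)-x^{-1}(u)-x^{-1}(w)\big)$, and $\nu^*(G)$ is the maximum of $\nu(x)$ over all c-sequences for $G$. $P_n$ is the path with vertex set $\{1,\dots,n\}$ and edges $\{j,j+1\}$, $1\le j\le n-1$. *)

(* Defs.v *)
From mathcomp Require Import all_boot.
Set Implicit Arguments. Unset Strict Implicit. Unset Printing Implicit Defensive.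

(* A finite (simple) graph is given by a finite vertex type V, a finite edge
   type E, and the two endpoints of each edge: ends e = (u, w).
   The disjoint union V ⊔ E is the sum type (V + E). *)

Section CSeq.
Variables (V E : finType) (ends : E -> V * V).

Definition ell := (#|V| + #|E|)%N.

(* A c-sequence x : {1..ell} -> V ⊔ E (a bijection) is represented by its
   inverse  sigma = x^{-1} : V ⊔ E -> 'I_ell, an injective (hence bijective,
   by cardinality) map; the position of a in the sequence is (sigma a).+1. *)
Definition pos (s : {ffun V + E -> 'I_ell}) (a : V + E) : nat := (s a).+1.

Definition is_cseq (s : {ffun V + E -> 'I_ell}) : bool :=
  injectiveb s &&
  [forall e : E, (pos s (inl (ends e).1) < pos s (inr e))
              && (pos s (inl (ends e).2) < pos s (inr e))].

(* cost nu(x) = sum over edges e = uw of 2 x^{-1}(e) - x^{-1}(u) - x^{-1}(w);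
   for a c-sequence every summand is nonnegative, so nat subtraction is exact. *)
Definition cost (s : {ffun V + E -> 'I_ell}) : nat :=
  \sum_(e : E) (2 * pos s (inr e) - (pos s (inl (ends e).1) + pos s (inl (ends e).2))).

Definition nu_star : nat := \max_(s | is_cseq s) cost s.

End CSeq.

(* The path P_n: vertices 1..n (here 'I_n, i.e. 0..n-1), edges {j, j+1}
   for 1 <= j <= n-1 (here j : 'I_(n.-1), joining j and j+1). *)
Lemma path_succ_lt (n : nat) (j : 'I_n.-1) : (j.+1 < n)%N.
Proof. by case: n j => [|n] [j /= Hj]. Qed.

Definition path_ends (n : nat) (j : 'I_n.-1) : 'I_n * 'I_n :=
  (widen_ord (leq_pred n) j, Ordinal (path_succ_lt j)).

(* Main.v *)
Require Import Defs.
From mathcomp Require Import all_boot zify.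
Set Implicit Arguments.

Lemma sorted_sum_lb (s : seq nat) (a : nat) :
  sorted ltn s -> all (leq a) s -> \sum_(i < size s) (a + i) <= sumn s.
Proof.
elim: s a => [|x t IH] a /=; first by rewrite big_ord0.
move=> Hp /andP[Hax Hat].
rewrite big_ord_recl /= addn0.
have Ht : sorted ltn t by exact: path_sorted Hp.
have Hxt : all (ltn x) t := order_path_min ltn_trans Hp.
have Hat' : all (leq a.+1) t.
  apply/allP => y Hy; have := allP Hxt y Hy; rewrite /=; lia.
have := IH a.+1 Ht Hat'.
move=> H; apply: leq_add => //.
apply: leq_trans H; rewrite leq_eqVlt; apply/orP; left; apply/eqP.
by apply: eq_bigr => i _; rewrite /bump /=; lia.
Qed.

Lemma uniq_sum_lb (s : seq nat) : uniq s -> all (leq 1) s ->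
  \sum_(i < size s) i.+1 <= sumn s.
Proof.
move=> Hu Ha.
rewrite -(perm_sumn (permEl (perm_sort leq s))) -(size_sort leq s).
under eq_bigr => i _ do rewrite -add1n.
apply: sorted_sum_lb.
  by rewrite ltn_sorted_uniq_leq sort_uniq Hu sort_sorted //; exact: leq_total.
by rewrite (perm_all _ (permEl (perm_sort leq s))).
Qed.

Lemma tri (k : nat) : 2 * \sum_(i < k) i.+1 = k * k.+1.
Proof.
elim: k => [|k IH]; first by rewrite big_ord0.
rewrite big_ord_recr /= mulnDr IH; lia.
Qed.

Lemma sum_const (k c : nat) : \sum_(i < k) c = k * c.
Proof. elim: k => [|k IH]; first by rewrite big_ord0. rewrite big_ord_recr /= IH; lia. Qed.

Section P.
Variable m : nat.
Notation V := 'I_m.+2.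
Notation E := 'I_m.+1.
Notation L := (ell V E).
Notation ends := (@path_ends m.+2).

Lemma ellE : L = (m.+2 + m.+1)%N.
Proof. by rewrite /ell !card_ord. Qed.

Lemma total_sum (s : {ffun V + E -> 'I_L}) : injective s ->
  \sum_(v : V) pos s (inl v) + \sum_(j : E) pos s (inr j) = \sum_(i < L) i.+1.
Proof.
move=> Hi.
rewrite -(big_sumType _ xpredT (fun a => pos s a)) /=.
have Hb : bijective s.
  by apply: (inj_card_bij Hi); rewrite card_sum card_ord /ell !card_ord.
rewrite [RHS](reindex s) /=; last by apply: onW_bij.
by [].
Qed.

Lemma cost_id (s : {ffun V + E -> 'I_L}) : is_cseq ends s ->
  cost ends s + \sum_(j : E) (pos s (inl (ends j).1) + pos s (inl (ends j).2))
  = 2 * \sum_(j : E) pos s (inr j).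
Proof.
move=> /andP[_ /forallP H].
rewrite /cost -big_split big_distrr /=; apply: eq_bigr => j _.
have /andP[H1 H2] := H j.
rewrite subnK // mul2n -addnn; exact: leq_add (ltnW H1) (ltnW H2).
Qed.

Definition f (s : {ffun V + E -> 'I_L}) (v : V) := pos s (inl v).

Lemma edge_sum (s : {ffun V + E -> 'I_L}) :
  \sum_(j : E) (pos s (inl (ends j).1) + pos s (inl (ends j).2))
  + (f s ord0 + f s ord_max) = 2 * \sum_(v : V) f s v.
Proof.
rewrite big_split /= mul2n -addnn.
have -> : \sum_(j : E) pos s (inl (ends j).1) = \sum_(j : E) f s (widen_ord (leqnSn _) j).
  by apply: eq_bigr => j _; rewrite /f; congr (pos s (inl _)); apply: val_inj.
have -> : \sum_(j : E) pos s (inl (ends j).2) = \sum_(j : E) f s (lift ord0 j).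
  by apply: eq_bigr => j _; rewrite /f; congr (pos s (inl _)); apply: val_inj.
have A : \sum_(v : V) f s v = \sum_(j : E) f s (widen_ord (leqnSn _) j) + f s ord_max := big_ord_recr _ _.
have B : \sum_(v : V) f s v = f s ord0 + \sum_(j : E) f s (lift ord0 j) := big_ord_recl _ _.
rewrite {1}A B; lia.
Qed.

Lemma sv_split (s : {ffun V + E -> 'I_L}) :
  \sum_(v : V) f s v = f s ord0 + f s ord_max
     + \sum_(i < m) f s (lift ord0 (widen_ord (leqnSn m) i)).
Proof.
rewrite big_ord_recl big_ord_recr /=.
have -> : lift ord0 (@ord_max m) = ord_max :> V by apply: val_inj.
lia.
Qed.
End P.

Lemma inj_sum_lb (I : finType) (g : I -> nat) : injective g -> (forall x, 0 < g x) ->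
  \sum_(i < #|I|) i.+1 <= \sum_(x : I) g x.
Proof.
move=> Hi Hp.
have := @uniq_sum_lb (map g (enum I)).
rewrite size_map -cardE sumnE big_map big_enum /=; apply.
  by rewrite (map_inj_uniq Hi) enum_uniq.
by apply/allP => y /mapP [x _ ->]; exact: Hp.
Qed.

Section Q.
Variable m : nat.
Notation V := 'I_m.+2.
Notation E := 'I_m.+1.
Notation L := (ell V E).
Notation ends := (@path_ends m.+2).

Lemma f_inj (s : {ffun V + E -> 'I_L}) : injective s -> injective (f s).
Proof.
move=> Hi v w; rewrite /f /pos => [[H]].
have : inl v = inl w :> V + E by apply: Hi; apply: val_inj.
by case.
Qed.

Lemma sv_lb (s : {ffun V + E -> 'I_L}) : injective s ->
  m.+2 * m.+3 <= 2 * \sum_(v : V) f s v.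
Proof.
move=> Hi; rewrite -tri leq_mul2l /=.
have := @inj_sum_lb V _ (f_inj Hi) (fun _ => ltn0Sn _).
by rewrite card_ord.
Qed.

Lemma o_lb (s : {ffun V + E -> 'I_L}) : injective s ->
  m * m.+1 <= 2 * \sum_(i < m) f s (lift ord0 (widen_ord (leqnSn m) i)).
Proof.
move=> Hi; rewrite -tri leq_mul2l /=.
have Hg : injective (fun i : 'I_m => f s (lift ord0 (widen_ord (leqnSn m) i))).
  move=> i j /= /(f_inj Hi) /lift_inj /(congr1 val) /= H; exact: val_inj.
have := @inj_sum_lb _ _ Hg (fun _ => ltn0Sn _).
by rewrite card_ord.
Qed.

Lemma upper (s : {ffun V + E -> 'I_L}) : is_cseq ends s ->
  cost ends s <= 2 * m.+2 ^ 2 - 2 * m.+2 - 1.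
Proof.
move=> Hc.
have Hi : injective s by case/andP: Hc => /injectiveP.
have H1 := @cost_id m s Hc.
have H2 := @edge_sum m s.
have H3 := @total_sum m s Hi.
have H4 := tri L.
rewrite ellE in H3 H4.
have H5 := sv_lb Hi.
have H6 := o_lb Hi.
have H7 := @sv_split m s.
rewrite /f in H2 H5 H6 H7.
nia.
Qed.
End Q.

Section W.
Variable m : nat.
Notation V := 'I_m.+2.
Notation E := 'I_m.+1.
Notation L := (ell V E).
Notation ends := (@path_ends m.+2).

Definition h (v : V) : nat :=
  if nat_of_ord v == 0 then m else if nat_of_ord v == m.+1 then m.+1 else (nat_of_ord v).-1.

Lemma h_lt v : h v < m.+2.
Proof. have := ltn_ord v; rewrite /h; case: (nat_of_ord v =P 0); case: (nat_of_ord v =P m.+1); lia. Qed.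

Lemma h_inj : injective h.
Proof.
move=> v w; have := ltn_ord v; have := ltn_ord w; rewrite /h.
case: (nat_of_ord v =P 0); case: (nat_of_ord v =P m.+1); case: (nat_of_ord w =P 0); case: (nat_of_ord w =P m.+1);
move=> *; apply: ord_inj; lia.
Qed.

Lemma hv_lt v : h v < L.
Proof. rewrite ellE; have := h_lt v; lia. Qed.

Lemma he_lt (j : E) : m.+2 + j < L.
Proof. rewrite ellE; have := ltn_ord j; lia. Qed.

Definition sw : {ffun V + E -> 'I_L} :=
  [ffun a => match a with inl v => Ordinal (hv_lt v) | inr j => Ordinal (he_lt j) end].

Lemma sw_inj : injective sw.
Proof.
move=> [v|j] [w|k]; rewrite !ffunE => /(congr1 val) /= H.
- by congr inl; apply: h_inj.
- have := h_lt v; lia.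
- have := h_lt w; lia.
- by congr inr; apply: ord_inj; lia.
Qed.

Lemma sw_cseq : is_cseq ends sw.
Proof.
apply/andP; split; first by apply/injectiveP; exact: sw_inj.
apply/forallP => j; rewrite /pos !ffunE /=.
by apply/andP; split; rewrite ltnS; apply: leq_trans (h_lt _) _; rewrite leq_addr.
Qed.

Lemma sw_cost : cost ends sw = 2 * m.+2 ^ 2 - 2 * m.+2 - 1.
Proof.
have H1 := @cost_id m sw sw_cseq.
have H2 := @edge_sum m sw.
have H3 := @total_sum m sw sw_inj.
have H4 := tri L.
rewrite ellE in H3 H4.
have HE : \sum_(j : E) pos sw (inr j) = m.+1 * m.+2 + \sum_(j < m.+1) j.+1.
  rewrite -sum_const -big_split; apply: eq_bigr => j _; rewrite /pos ffunE /=; lia.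
have H5 := tri m.+1.
have P0 : f sw ord0 = m.+1 by rewrite /f /pos ffunE /= /h.
have P1 : f sw ord_max = m.+2 by rewrite /f /pos ffunE /= /h /= eqxx.
rewrite P0 P1 in H2.
rewrite /f in H2.
nia.
Qed.
End W.

Theorem theorem3 (n : nat) (hn : (2 <= n)%N) :
  nu_star (@path_ends n) = (2 * n ^ 2 - 2 * n - 1)%N.
Proof.
case: n hn => [|[|m]] // _.
apply/eqP; rewrite eqn_leq; apply/andP; split.
  by apply/bigmax_leqP => s Hs; exact: upper.
rewrite -sw_cost; exact: (leq_bigmax_cond _ (sw_cseq m)).
Qed.
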